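(* Let $X,Y$ be template graphs with $O(X)=O(Y)$ such that the $(X,Y)$-extension is 3-compatible. Suppose that for every 3-connected cubic graph $H$ containing a subgraph isomorphic to $c(Y)$, either $H$ has a 3-decomposition, or (the copy of) $c(Y)$ is an induced subgraph of $H$ and the reduction $H[Y\to X]$ is a simple 3-connected graph. Then $c(Y)$ is reducible, i.e. no 3-connected cubic graph without a 3-decomposition and of minimum order among all such graphs contains a subgraph isomorphic to $c(Y)$.
   Context: All graphs are finite; cubic means 3-regular, and cubic graphs are simple. A 3-decomposition of $G$ is a partition of $E(G)$ into the edge sets of a spanning tree, a (possibly empty) 2-regular subgraph and a (possibly empty) matching. A template graph is a graph $X$ whose vertex set is partitioned into inner vertices $I(X)$, all of degree 3, and outer vertices $O(X)$, all of degree 1; its core $c(X)$ is $X-O(X)$. Transformations: let $X,Y$ be template graphs with $O(X)=O(Y)$, let $G$ be a cubic graph and $\varphi$ an isomorphism from $c(X)$ onto an induced subgraph $R'$ of $G$. Since $G$ is cubic, each $\varphi(v)$ has exactly as many neighbours outside $R'$ as $v$ has outer neighbours in $X$; fix a map $\psi\colon O(X)\to V(G)\setminus V(R')$ such that $vw\mapsto \varphi(v)\psi(w)$ ($v\in I(X)$, $w\in O(X)$, $vw\in E(X)$) is a bijection onto the set of edges of $G$ between $R'$ and $G-V(R')$. Then $G[X\to Y]:=(G-V(R'))\cup c(Y)+\{v\psi(w): vw\in E(Y), w\in O(Y)\}$ (possibly a multigraph). It is called an extension if $|V(X)|<|V(Y)|$ and a reduction if $|V(X)|>|V(Y)|$.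 The $(X,Y)$-extension is 3-compatible if for every cubic graph $G$ with a 3-decomposition and every graph $H=G[X\to Y]$ obtained this way, $H$ has a 3-decomposition. *)

(* Defs.v *)
From mathcomp Require Import all_boot.
Set Implicit Arguments. Unset Strict Implicit. Unset Printing Implicit Defensive.

(** Finite multigraphs: a finite vertex type, a finite edge type, and for each
    edge its (ordered, but read as unordered) pair of end vertices.  Loops and
    parallel edges are allowed. *)
Record mgraph := MGraph { mV : finType; mE : finType; mends : mE -> mV * mV }.

Section Graphs.
Variable G : mgraph.

Definition mult (x y : mV G) : nat :=
  #|[set e : mE G | (mends e == (x, y)) || (mends e == (y, x))]|.

(** degree of v in the spanning subgraph with edge set F (a loop counts 2) *)
Definition edeg (F : {set mE G}) (v : mV G) : nat :=
  \sum_(e in F) (((mends e).1 == v) + ((mends e).2 == v)).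

Definition deg (v : mV G) : nat := edeg setT v.

Definition simple : Prop :=
  (forall e : mE G, (mends e).1 != (mends e).2) /\ (forall x y : mV G, mult x y <= 1).

Definition cubic : Prop := simple /\ forall v : mV G, deg v = 3.

Definition adj_in (F : {set mE G}) : rel (mV G) :=
  fun x y => [exists e in F, (mends e == (x, y)) || (mends e == (y, x))].

(** (V, T) is a tree: connected and acyclic (no edge of T has its ends
    connected in T - e) *)
Definition spanning_tree (T : {set mE G}) : Prop :=
  (forall x y : mV G, connect (adj_in T) x y) /\
  (forall e, e \in T -> ~~ connect (adj_in (T :\ e)) (mends e).1 (mends e).2).

Definition two_regular (C : {set mE G}) : Prop :=
  forall v : mV G, edeg C v = 0 \/ edeg C v = 2.

Definition matching (M : {set mE G}) : Prop := forall v : mV G, edeg M v <= 1.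

Definition three_decomposition (T C M : {set mE G}) : Prop :=
  [/\ T :&: C = set0, T :&: M = set0, C :&: M = set0 & T :|: C :|: M = setT] /\
  [/\ spanning_tree T, two_regular C & matching M].

Definition has_3dec : Prop := exists T C M, three_decomposition T C M.

Definition connected_on (A : {set mV G}) : Prop :=
  forall x y, x \in A -> y \in A ->
    connect (fun a b => [&& a \in A, b \in A & adj_in setT a b]) x y.

Definition three_connected : Prop :=
  3 < #|mV G| /\ forall S : {set mV G}, #|S| <= 2 -> connected_on (~: S).

End Graphs.

(** Template graphs with outer vertex set W: vertex type = inner type + W. *)
Record template (W : finType) :=
  Template { tI : finType; tE : finType; tends : tE -> (tI + W)%type * (tI + W)%type }.

Definition tgraph (W : finType) (X : template W) : mgraph :=
  @MGraph (tI X + W)%type (tE X) (@tends W X).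

Definition tmult (W : finType) (X : template W) (a b : (tI X + W)%type) : nat :=
  @mult (tgraph X) a b.

Definition is_outer (A W : Type) (a : (A + W)%type) : bool :=
  if a is inr _ then true else false.

(** inner vertices have degree 3, outer vertices degree 1, and (as implicit in
    the transformation, which only reconnects inner-outer edges) no edge joins
    two outer vertices *)
Definition is_template (W : finType) (X : template W) : Prop :=
  (forall u : tI X, @deg (tgraph X) (inl u) = 3) /\
  (forall w : W, @deg (tgraph X) (inr w) = 1) /\
  (forall e : tE X, ~~ (is_outer (tends e).1 && is_outer (tends e).2)).

(** Multiplicities of the graph G[X -> Y], whose vertices are those of
    G - V(R') (tagged inl) and the inner vertices of Y (tagged inr). *)
Definition target_mult (G : mgraph) (W : finType) (Y : template W)
    (psi : W -> mV G) (s t : (mV G + tI Y)%type) : nat :=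
  match s, t with
  | inl x, inl y => mult x y
  | inr u, inr v => tmult (inl u) (inl v)
  | inr u, inl x | inl x, inr u => \sum_(w | psi w == x) tmult (inl u) (inr w)
  end.

(** H is (isomorphic to) G[X -> Y] via phi (an isomorphism of c(X) onto an
    induced subgraph R' of G) and psi : O(X) -> V(G) - V(R') (such that
    vw |-> phi(v)psi(w) is a bijection onto the edges between R' and the rest). *)
Definition transformation (G : mgraph) (W : finType) (X Y : template W)
    (phi : tI X -> mV G) (psi : W -> mV G) (H : mgraph) : Prop :=
  [/\ injective phi,
      (forall u v : tI X, tmult (inl u) (inl v) = mult (phi u) (phi v)),
      (forall w : W, psi w \notin codom phi),
      (forall (u : tI X) (x : mV G), x \notin codom phi ->
          mult (phi u) x = \sum_(w | psi w == x) tmult (inl u) (inr w)) &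
      exists sigma : mV H -> (mV G + tI Y)%type,
        [/\ injective sigma,
            (forall s, (s \in codom sigma) =
                       (if s is inl x then x \notin codom phi else true)) &
            forall h1 h2 : mV H, mult h1 h2 = target_mult psi (sigma h1) (sigma h2)]].

Arguments transformation {G W} X Y phi psi H.

Definition three_compatible (W : finType) (X Y : template W) : Prop :=
  forall (G : mgraph) (phi : tI X -> mV G) (psi : W -> mV G) (H : mgraph),
    cubic G -> has_3dec G -> transformation X Y phi psi H -> has_3dec H.

Definition core_subgraph (W : finType) (Y : template W) (H : mgraph)
    (phi : tI Y -> mV H) : Prop :=
  injective phi /\ forall u v : tI Y, tmult (inl u) (inl v) <= mult (phi u) (phi v).

Definition core_induced (W : finType) (Y : template W) (H : mgraph)
    (phi : tI Y -> mV H) : Prop :=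
  injective phi /\ forall u v : tI Y, tmult (inl u) (inl v) = mult (phi u) (phi v).

Definition min_counterexample (H : mgraph) : Prop :=
  [/\ cubic H, three_connected H, ~ has_3dec H &
      forall H' : mgraph, cubic H' -> three_connected H' -> ~ has_3dec H' ->
        #|mV H| <= #|mV H'|].

Definition reducible (W : finType) (Y : template W) : Prop :=
  forall H : mgraph, min_counterexample H ->
    forall phi : tI Y -> mV H, ~ core_subgraph phi.

(* Main.v *)
Require Import Defs.
From mathcomp Require Import all_boot.
Set Implicit Arguments. Unset Strict Implicit. Unset Printing Implicit Defensive.

Lemma card_sum (T : finType) (P : pred T) : #|[set e | P e]| = \sum_e (P e : nat).
Proof.
rewrite -sum1_card big_mkcond /=; apply: eq_bigr => e _; rewrite inE; by case: (P e).
Qed.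

Lemma mult_sum (G : mgraph) (x y : mV G) :
  mult x y = \sum_e ((mends e == (x,y)) || (mends e == (y,x)) : nat).
Proof.
rewrite /mult -sum1_card big_mkcond /=; apply: eq_bigr => e _; rewrite inE.
by case: (_ || _).
Qed.

Lemma sum_eq1 (T : finType) (c : T) : \sum_(y : T) (c == y : nat) = 1.
Proof.
rewrite (bigD1 c) //= eqxx big1 // => y /negbTE; rewrite eq_sym => ->. by [].
Qed.

Lemma mult_sym (G : mgraph) (x y : mV G) : mult x y = mult y x.
Proof. rewrite /mult; apply: eq_card => e; rewrite !inE orbC. by []. Qed.

Lemma deg_mult (G : mgraph) (v : mV G) : deg v = \sum_y mult v y + mult v v.
Proof.
rewrite /deg /edeg (eq_bigr _ (fun y _ => mult_sum v y)) mult_sum.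
rewrite exchange_big -big_split /= big_mkcond /=.
apply: eq_bigr => e _; rewrite in_setT.
case: (mends e) => a b /=.
under eq_bigr do rewrite !xpair_eqE.
rewrite !xpair_eqE.
case: (eqVneq a v) => [->|av]; case: (eqVneq b v) => [->|bv] /=.
all: under eq_bigr => y _ do rewrite ?andbT ?andbF ?orbb ?orbF.
all: rewrite ?sum_eq1 ?big1 //.
Qed.

Lemma simple_loop0 (G : mgraph) (x : mV G) : simple G -> mult x x = 0.
Proof.
move=> [H _]; rewrite mult_sum big1 // => e _; move: (H e).
case: (mends e) => a b /= ab; apply/eqP; rewrite eqb0 negb_or.
by apply/andP; split; apply/negP => /eqP [ha hb]; move: ab; rewrite ha hb eqxx.
Qed.

Lemma sum_codom (A B : finType) (f : A -> B) (P : pred B) (F : B -> nat) :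
  injective f -> (forall b, (b \in codom f) = P b) ->
  \sum_a F (f a) = \sum_(b | P b) F b.
Proof.
move=> inj hP.
transitivity (\sum_(b in [set f x | x in (predT : pred A)]) F b).
  by rewrite big_imset //; move=> x y _ _; apply: inj.
apply: eq_bigl => b /=; rewrite -hP; apply/imsetP/codomP => [[x _ ->]|[x ->]]; by exists x.
Qed.

Lemma outer_sum (W : finType) (X : template W) (w : W) :
  is_template X -> \sum_u tmult (inl u) (inr w : (tI X + W)%type) = 1.
Proof.
move=> [_ [ho hn]].
have := ho w; rewrite deg_mult big_sumType /=.
have z : forall w', @mult (tgraph X) (inr w) (inr w') = 0.
  move=> w'; apply/eqP; rewrite cards_eq0; apply/eqP/setP => e.
  rewrite !inE; apply/negbTE; move: (hn e) => /=; case: (tends e) => a b /=.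
  by apply: contra => /orP [/eqP [-> ->]|/eqP [-> ->]].
rewrite z addn0 [X in _ + X = _]big1 ?addn0 // => H.
rewrite -{}H /tmult; apply: eq_bigr => u _; exact: mult_sym.
Qed.

Lemma inner_sum (W : finType) (X : template W) (u : tI X) :
  is_template X -> tmult (inl u) (inl u : (tI X + W)%type) = 0 ->
  \sum_v tmult (inl u) (inl v : (tI X + W)%type) + \sum_w tmult (inl u) (inr w : (tI X + W)%type) = 3.
Proof.
move=> [hi _] h0; have := hi u; rewrite deg_mult big_sumType /=.
by rewrite /tmult in h0 *; rewrite h0 addn0.
Qed.

Unset Implicit Arguments.

Theorem lemma11 (W : finType) (X Y : template W) :
  is_template X -> is_template Y ->
  #|tI X| + #|W| < #|tI Y| + #|W| ->
  three_compatible X Y ->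
  (forall (H : mgraph) (phi : tI Y -> mV H),
     cubic H -> three_connected H -> core_subgraph phi ->
     has_3dec H \/
     (core_induced phi /\
      exists (psi : W -> mV H) (H' : mgraph),
        transformation Y X phi psi H' /\ simple H' /\ three_connected H')) ->
  reducible Y.
Proof.
move=> tX tY hcard comp hyp H [cH c3H n3H minH] phi sub.
have [//|[[_ indphi] [psi [H' [tr [sH' c3H']]]]]] := hyp H phi cH c3H sub.
case: tr => injphi c2 c3 c4 [sigma [sinj sim smult]].
have sumH' : forall F : _ -> nat, \sum_h F (sigma h) =
    \sum_(x | x \notin codom phi) F (inl x) + \sum_u F (inr u).
  move=> F.
  by rewrite (sum_codom (P := fun s => if s is inl x then x \notin codom phi else true) F sinj sim) big_sumType.
have sumH : forall F : _ -> nat, \sum_x F x =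
    \sum_(x | x \notin codom phi) F x + \sum_u F (phi u).
  move=> F; rewrite (bigID (mem (codom phi))) addnC; congr (_ + _).
  by rewrite (sum_codom (P := mem (codom phi)) F injphi).
have cH' : cubic H'.
  split => // h; rewrite deg_mult (simple_loop0 _ sH') addn0.
  under eq_bigr do rewrite smult.
  rewrite (sumH' (target_mult psi (sigma h))).
  have := codom_f sigma h; rewrite sim.
  case E: (sigma h) => [x|u] /= hx.
  - rewrite exchange_big /=.
    under [X in _ + X]eq_bigr => w _ do rewrite (outer_sum _ tX).
    have := proj2 cH x; rewrite deg_mult (simple_loop0 _ (proj1 cH)) addn0 sumH => <-.
    congr (_ + _).
    under [RHS]eq_bigr => u _ do rewrite mult_sym (c4 u x hx).
    rewrite exchange_big /=.
    by under [RHS]eq_bigr => w _ do rewrite (outer_sum _ tY).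
  - rewrite addnC -[RHS](inner_sum (u:=u) tX); last first.
      by have := smult h h; rewrite simple_loop0 // E /= => <-.
    congr (_ + _).
    rewrite (partition_big psi (fun x => x \notin codom phi)) //=.
have hc : #|mV H'| < #|mV H|.
  have e1 : #|mV H'| = \sum_(h : mV H') (fun _ => 1) (sigma h) by rewrite sum1_card.
  have e2 : #|mV H| = \sum_(h : mV H) 1 by rewrite sum1_card.
  rewrite e1 e2 (sumH' (fun _ => 1)) (sumH (fun _ => 1)) ltn_add2l !sum1_card.
  by rewrite ltn_add2r in hcard.
have ex1 : forall u : tI X, exists h, sigma h = inr u.
  move=> u; have: inr u \in codom sigma by rewrite sim.
  by case/codomP => h ->; exists h.
have [phi' Hphi'] := fin_all_exists ex1.
have ex2 : forall w : W, exists h, sigma h = inl (psi w).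
  move=> w; have: inl (psi w) \in codom sigma by rewrite sim /= c3.
  by case/codomP => h ->; exists h.
have [psi' Hpsi'] := fin_all_exists ex2.
have ex3 : forall h : mV H, exists s : (mV H' + tI Y)%type,
    match s with inr u => phi u = h | inl h' => sigma h' = inl h end.
  move=> h; case: (boolP (h \in codom phi)) => [/codomP [u ->]| hn].
    by exists (inr u).
  have: inl h \in codom sigma by rewrite sim.
  by case/codomP => h' e; exists (inl h'); rewrite e.
have [tau Htau] := fin_all_exists ex3.
have psi'eq : forall w y x, sigma y = inl x -> (psi' w == y) = (psi w == x).
  move=> w y x E; apply/eqP/eqP => e.
    by move: E; rewrite -e Hpsi' => [[]].
  by apply: sinj; rewrite Hpsi' E e.
have h3 : has_3dec H' -> False.
  move=> h3; apply: n3H; apply: (comp H' phi' psi' H cH' h3); split.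
  - by move=> u v e; have := Hphi' u; rewrite e Hphi' => [[]].
  - by move=> u v; rewrite smult !Hphi'.
  - by move=> w; apply/codomP => [[u e]]; have := Hpsi' w; rewrite e Hphi'.
  - move=> u x hx; rewrite smult Hphi'.
    have := codom_f sigma x; rewrite sim; case E: (sigma x) => [y|v] /= hy.
      by apply: eq_bigl => w; rewrite (psi'eq w x y E).
    exfalso; move/codomP: hx; apply; exists v; apply: sinj; by rewrite E Hphi'.
  - exists tau; split.
    + move=> h1 h2 e; have := Htau h1; have := Htau h2; rewrite e.
      by case: (tau h2) => [h'|u] -> // [].
    + move=> [y|v] /=.
      * apply/codomP/idP => [[h e]|hy].
          have := Htau h; rewrite -e => sy.
          by apply/codomP => [[u yu]]; move: sy; rewrite yu Hphi'.
        have := codom_f sigma y; rewrite sim; case E: (sigma y) => [x|v] /= hx.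
          exists x; have := Htau x; case: (tau x) => [h'|v] e.
            by congr inl; apply: sinj; rewrite e E.
          by move: hx; rewrite -e codom_f.
        exfalso; move/codomP: hy; apply; exists v; apply: sinj; by rewrite E Hphi'.
      * apply/codomP; exists (phi v).
        have := Htau (phi v); case: (tau (phi v)) => [h'|v'] e.
          by have := codom_f sigma h'; rewrite sim e /= codom_f.
        by rewrite (injphi _ _ e).
    + move=> h1 h2; have := Htau h1; have := Htau h2.
      case: (tau h1) => [a|u]; case: (tau h2) => [b|v] /= e2 e1.
      * by rewrite smult e1 e2.
      * have := codom_f sigma a; rewrite sim e1 /= => ha.
        rewrite -e2 mult_sym c4 //; apply: eq_bigl => w; by rewrite (psi'eq w a h1 e1).
      * have := codom_f sigma b; rewrite sim e2 /= => hb.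
        rewrite -e1 c4 //; apply: eq_bigl => w; by rewrite (psi'eq w b h2 e2).
      * by rewrite -e1 -e2 c2.
have := minH H' cH' c3H' h3.
by rewrite leqNgt hc.
Qed.
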